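(* Let $S=(U,F)$ be an undirected graph on $q$ nodes (possibly with self-loops) that has an odd cycle, and let $x^*$ lie in the relative interior of $\mathcal{X}(S)$. Then there exist a closed neighborhood $\mathcal{U}$ of $x^*$ in the simplex $\Delta^{q-1}$ (with $\mathcal{U}\subseteq\mathcal{X}(S)$) and a continuous map $\phi:\mathcal{U}\to\operatorname{int}\Delta^{|F|-1}$ such that $Z_S\phi(x)=x$ for all $x\in\mathcal{U}$.
   Context: $\Delta^{m-1}=\{x\in\mathbb{R}^m: x\ge 0,\ \mathbf{1}^\top x=1\}$ is the standard simplex, and $\operatorname{int}\Delta^{m-1}$ denotes its relative interior (all entries positive). The incidence matrix $Z_S$ of $S$ is the $q\times|F|$ matrix whose column $z_j$, for edge $f_j$, has entry $1$ at $u_i$ if $f_j$ is a self-loop at $u_i$, entries $1/2$ at the two endpoints if $f_j$ is a non-loop edge, and $0$ elsewhere. The edge polytope is $\mathcal{X}(S)=\operatorname{conv}\{z_j\}$, relative interior taken in its affine hull. A cycle is odd if it has an odd number of distinct nodes; self-loops count as odd cycles. *)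

(* Defs.v *)
From HB Require Import structures.
From mathcomp Require Import all_boot all_order all_algebra.
From mathcomp Require Import all_classical all_reals all_analysis.
Unset Implicit Arguments.
Import Order.TTheory GRing.Theory Num.Theory.
Import numFieldNormedType.Exports.
Local Open Scope classical_set_scope.
Local Open Scope ring_scope.

(* A graph S = (U, F): nodes U = 'I_q, edges F indexed by 'I_m,
   edge j having endpoints e j = (u, v) (u = v means a self-loop). *)

Definition edges_distinct (q m : nat) (e : 'I_m -> 'I_q * 'I_q) : Prop :=
  forall j k : 'I_m, (e j == e k) || (e j == ((e k).2, (e k).1)) -> j = k.

Definition adj (q m : nat) (e : 'I_m -> 'I_q * 'I_q) : rel 'I_q :=
  fun u v => [exists j, (e j == (u, v)) || (e j == (v, u))].

Definition graph_connected (q m : nat) (e : 'I_m -> 'I_q * 'I_q) : Prop :=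
  forall u v : 'I_q, connect (adj q m e) u v.

(* An odd cycle: distinct nodes v_0, ..., v_{k-1}, k odd, consecutive ones
   (cyclically) adjacent; k = 1 is exactly a self-loop. *)
Definition has_odd_cycle (q m : nat) (e : 'I_m -> 'I_q * 'I_q) : Prop :=
  exists s : seq 'I_q, [&& uniq s, odd (size s) & cycle (adj q m e) s].

Definition simplex (R : realType) (n : nat) : set 'cV[R]_n :=
  [set x | (forall i, 0 <= x i 0) /\ \sum_i x i 0 = 1].

Definition int_simplex (R : realType) (n : nat) : set 'cV[R]_n :=
  [set x | (forall i, 0 < x i 0) /\ \sum_i x i 0 = 1].


Definition incidence (R : realType) (q m : nat) (e : 'I_m -> 'I_q * 'I_q)
  : 'M[R]_(q, m) :=
  \matrix_(i, j) (if (e j).1 == (e j).2 then ((i == (e j).1)%:R : R)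
                  else (i == (e j).1)%:R / 2 + (i == (e j).2)%:R / 2).


Definition edge_polytope (R : realType) (q m : nat) (e : 'I_m -> 'I_q * 'I_q)
  : set 'cV[R]_q :=
  [set incidence R q m e *m l | l in simplex R m].


Definition edge_aff_hull (R : realType) (q m : nat) (e : 'I_m -> 'I_q * 'I_q)
  : set 'cV[R]_q :=
  [set incidence R q m e *m l | l in [set l : 'cV[R]_m | \sum_i l i 0 = 1]].


Definition rel_interior (R : realType) (n : nat) (A H : set 'cV[R]_n)
  : set 'cV[R]_n :=
  [set x | A x /\ exists2 eps : R, 0 < eps & ball x eps `&` H `<=` A].

(* Main.v *)
Require Import Defs.
From HB Require Import structures.
From mathcomp Require Import all_boot all_order all_algebra.
From mathcomp Require Import all_classical all_reals all_analysis.
From mathcomp Require Import ring lra.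
Import Order.TTheory GRing.Theory Num.Theory.
Import numFieldNormedType.Exports.
Local Open Scope classical_set_scope.
Local Open Scope ring_scope.

Lemma sum_indic (R : realType) q (u : 'I_q) : \sum_(a < q) ((a == u)%:R : R) = 1.
Proof. by rewrite (bigD1 u) //= eqxx big1 ?addr0 // => a /negbTE ->. Qed.

Lemma inc_colsum (R : realType) q m e (j : 'I_m) :
  \sum_a incidence R q m e a j = 1.
Proof.
under eq_bigr do rewrite mxE.
case: eqP => _; first exact: sum_indic.
rewrite big_split /= -!mulr_suml !sum_indic; lra.
Qed.

Lemma inc_sum (R : realType) q m e (w : 'cV[R]_m) :
  \sum_j w j 0 = \sum_a (incidence R q m e *m w) a 0.
Proof.
under [RHS]eq_bigr do rewrite mxE.
rewrite exchange_big /=; apply: eq_bigr => j _.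
by rewrite -mulr_suml inc_colsum mul1r.
Qed.

Lemma mul_bound (R : realType) a b (M : 'M[R]_(a, b)) (v : 'cV[R]_b) d :
  0 <= d -> (forall k, `|v k 0| <= d) ->
  forall i, `|(M *m v) i 0| <= (\sum_i \sum_k `|M i k|) * d.
Proof.
move=> d0 hv i; rewrite mxE.
apply: (le_trans (ler_norm_sum _ _ _)).
apply: (@le_trans _ _ ((\sum_k `|M i k|) * d)).
  rewrite mulr_suml; apply: ler_sum => k _; rewrite normrM.
  by apply: ler_wpM2l => //.
apply: ler_wpM2r => //.
rewrite (bigD1 i) //= lerDl; apply: sumr_ge0 => i' _; apply: sumr_ge0 => *.
exact: normr_ge0.
Qed.

Lemma aux_lt (R : realType) (C eps : R) : 0 <= C -> 0 < eps -> C * (eps / (C + 1)) < eps.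
Proof.
move=> C0 e0; have C1 : 0 < C + 1 by lra.
rewrite mulrA ltr_pdivrMr // mulrDr mulr1 mulrC; lra.
Qed.

Lemma affine_continuous (R : realType) a b (M : 'M[R]_(a, b)) (w : 'cV[R]_a) :
  continuous (fun x : 'cV[R]_b => M *m x + w).
Proof.
move=> x A /nbhs_ballP [eps e0 epsA]; apply/nbhs_ballP.
set C := \sum_i \sum_k `|M i k|.
have C0 : 0 <= C by apply: sumr_ge0 => i _; apply: sumr_ge0 => *.
have C1 : 0 < C + 1 by lra.
exists (eps / (C + 1)); first by apply: divr_gt0.
move=> y [_ hy]; apply: epsA; split => // i j; rewrite (ord1 j).
suff : `|(M *m x + w - (M *m y + w)) i 0| < eps.
  by rewrite /ball /= !mxE.
have -> : M *m x + w - (M *m y + w) = M *m (x - y).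
  by rewrite mulmxBr opprD addrACA subrr addr0.
apply: (le_lt_trans (mul_bound _ _ _ _ _ (eps / (C + 1)) _ _ i)).
- by apply: ltW; apply: divr_gt0.
- by move=> k; rewrite !mxE; apply: ltW; have := hy k 0.
exact: aux_lt.
Qed.
Definition inS (R : realType) (q m : nat) (e : 'I_m -> 'I_q * 'I_q) (v : 'cV[R]_q) :=
  exists l : 'cV[R]_m, incidence R q m e *m l = v.

Set Implicit Arguments.
Lemma inS_add (R : realType) q m (e : 'I_m -> 'I_q * 'I_q) (u v : 'cV[R]_q) :
  inS R q m e u -> inS R q m e v -> inS R q m e (u + v).
Proof. by move=> [l1 <-] [l2 <-]; exists (l1 + l2); rewrite mulmxDr. Qed.

Lemma inS_scale (R : realType) q m (e : 'I_m -> 'I_q * 'I_q) (c : R) (u : 'cV[R]_q) :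
  inS R q m e u -> inS R q m e (c *: u).
Proof. by move=> [l1 <-]; exists (c *: l1); rewrite scalemxAr. Qed.

Lemma inS_sub (R : realType) q m (e : 'I_m -> 'I_q * 'I_q) (u v : 'cV[R]_q) :
  inS R q m e u -> inS R q m e v -> inS R q m e (u - v).
Proof.
move=> hu hv; apply: inS_add => //; rewrite -scaleN1r; exact: inS_scale.
Qed.

Lemma adj_inS (R : realType) q m (e : 'I_m -> 'I_q * 'I_q) (u v : 'I_q) :
  adj q m e u v -> inS R q m e (delta_mx u 0 + delta_mx v 0).
Proof.
move=> /existsP [j hj]; exists (2 *: delta_mx j 0).
rewrite -scalemxAr -colE; apply/matrixP => a b; rewrite (ord1 b) !mxE /=.
rewrite !andbT.
case/orP: hj => /eqP -> /=; case: eqP => [->|_]; lra.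
Qed.

Lemma path_inS (R : realType) q m (e : 'I_m -> 'I_q * 'I_q) (p : seq 'I_q) (x : 'I_q) :
  path (adj q m e) x p ->
  inS R q m e (delta_mx x 0 - (-1) ^+ (size p) *: delta_mx (last x p) 0).
Proof.
elim: p x => [|y p IH] x /=.
  by move=> _; rewrite expr0 scale1r subrr; exists 0; rewrite mulmx0.
move=> /andP [hxy hp].
have h1 := @adj_inS R q m e x y hxy; have h2 := IH y hp.
have -> : delta_mx x 0 - (-1) ^+ (size p).+1 *: delta_mx (last y p) 0 =
  (delta_mx x 0 + delta_mx y 0) - (delta_mx y 0 - (-1) ^+ (size p) *: delta_mx (last y p) 0) :> 'cV[R]_q.
  by rewrite exprS mulN1r scaleNr opprK opprB addrA addrAC addrK.
exact: inS_sub.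
Qed.

Lemma all_inS (R : realType) q m e :
  graph_connected q m e -> has_odd_cycle q m e ->
  forall i : 'I_q, inS R q m e (delta_mx i 0).
Proof.
move=> Hc [[|x p] /and3P [_ Hodd Hcyc]] //.
have hx : inS R q m e (delta_mx x 0).
  have := @path_inS R q m e _ _ Hcyc.
  rewrite last_rcons size_rcons -signr_odd /=.
  move: Hodd => /= ->; rewrite expr1 scaleN1r opprK => h.
  have -> : delta_mx x 0 = (2%:R^-1 : R) *: (delta_mx x 0 + delta_mx x 0) :> 'cV[R]_q.
    by rewrite scalerDr -scalerDl (_ : 2%:R^-1 + 2%:R^-1 = 1 :> R) ?scale1r //; lra.
  exact: inS_scale.
move=> i; have /connectP [p2 hp ->] := Hc x i.
have := @path_inS R q m e _ _ hp; rewrite -signr_odd.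
case: (odd (size p2)); rewrite ?expr0 ?expr1 ?scale1r ?scaleN1r => h.
- have h2 := inS_sub h hx.
  by rewrite opprK addrC addKr in h2.
- have h2 := inS_sub hx h.
  by rewrite opprB addrC subrK in h2.
Qed.

Lemma closed_coord (R : realType) n (i : 'I_n) (D : set R) :
  closed D -> closed [set x : 'cV[R]_n | D (x i 0)].
Proof.
move=> cD; apply: (@preimage_closed _ _ (fun x : 'cV[R]_n => x i 0) D) => // x _.
exact: coord_continuous.
Qed.

Lemma affine_coord_continuous (R : realType) a b (M : 'M[R]_(a, b)) (w : 'cV[R]_a) i :
  continuous (fun x : 'cV[R]_b => (M *m x + w) i 0).
Proof.
move=> x.
apply: (@continuous_comp _ _ _ (fun x => M *m x + w) (fun N : 'cV[R]_a => N i 0)).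
  exact: affine_continuous.
exact: coord_continuous.
Qed.

Theorem lemma3 (R : realType) (q m : nat) (e : 'I_m -> 'I_q * 'I_q)
  (He : edges_distinct q m e) (Hconn : graph_connected q m e) (Hodd : has_odd_cycle q m e)
  (xs : 'cV[R]_q) (Hxs : rel_interior R q (edge_polytope R q m e) (edge_aff_hull R q m e) xs) :
  exists U : set 'cV[R]_q,
    [/\ closed U, U `<=` simplex R q, U `<=` edge_polytope R q m e,
        (exists2 eps : R, 0 < eps & ball xs eps `&` simplex R q `<=` U) &
        exists phi : 'cV[R]_q -> 'cV[R]_m,
          {within U, continuous phi} /\
          forall x, U x -> int_simplex R m (phi x) /\ incidence R q m e *m phi x = x].
Proof.
set Z := incidence R q m e.
case: Hxs => [[l0 [l0ge l0sum] Zl0] [eps e0 Hb]].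
have mpos : (0 < m)%N.
  case: (posnP m) => // m0; move: l0sum; rewrite big1 => [h|i _]; last by exfalso; case: i => k; rewrite m0.
  by move/eqP: h; rewrite eq_sym oner_eq0.
have mR : (0 : R) < m%:R by rewrite ltr0n.
set lbar : 'cV[R]_m := const_mx (m%:R^-1).
set xbar := Z *m lbar.
set N := `|xs - xbar|.
have N0 : 0 <= N by rewrite /N normr_ge0.
set t := eps / (2 * (N + 1)).
have t0 : 0 < t by apply: divr_gt0 => //; apply: mulr_gt0 => //; lra.
have tN : t * N < eps.
  apply: (@le_lt_trans _ _ (t * (N + 1))); first by apply: ler_wpM2l; [exact: ltW | lra].
  rewrite /t invfM mulrA -mulrA mulVf ?mulr1; last by apply: lt0r_neq0; lra.
  lra.
set lt := (1 + t) *: l0 - t *: lbar.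
have [l1 [l1ge _] Zl1] : edge_polytope R q m e (Z *m lt).
  apply: Hb; split.
  - rewrite -ball_normE /=.
    have -> : xs - Z *m lt = t *: (xbar - xs).
      rewrite /lt mulmxBr -!scalemxAr Zl0 -/xbar.
      by apply/matrixP => i j; rewrite !mxE; ring.
    by rewrite normrZ gtr0_norm // distrC.
  - exists lt => //.
    rewrite /=; under eq_bigr do rewrite !mxE.
    rewrite sumrB -!mulr_sumr l0sum sumr_const card_ord -(mulr_natr (m%:R^-1)) mulVf.
      by rewrite !mulr1 addrK.
    exact: lt0r_neq0.
have t1 : 0 < 1 + t by lra.
set lstar := (1 + t)^-1 *: (l1 + t *: lbar).
set mu := (1 + t)^-1 * (t / m%:R).
have mu0 : 0 < mu by apply: mulr_gt0; [rewrite invr_gt0 | apply: divr_gt0].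
have lge : forall j, mu <= lstar j 0.
  move=> j; rewrite /lstar /mu !mxE; apply: ler_wpM2l; first by rewrite invr_ge0 ltW.
  by rewrite lerDr.
have Zls : Z *m lstar = xs.
  rewrite -scalemxAr mulmxDr -scalemxAr Zl1 /lt mulmxBr -!scalemxAr Zl0 -/xbar.
  by rewrite subrK scalerA mulVf ?scale1r //; exact: lt0r_neq0.
case: (choice (fun i => all_inS R Hconn Hodd i)) => f hf.
set P : 'M[R]_(m, q) := \matrix_(j, i) f i j 0.
have ZP : Z *m P = 1%:M.
  apply/matrixP => a i; rewrite [LHS]mxE; under eq_bigr => j _ do rewrite [P j i]mxE.
  rewrite /Z; have := congr1 (fun M : 'cV[R]_q => M a 0) (hf i); rewrite /= [LHS]mxE => ->.
  by rewrite !mxE andbT.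
set C := \sum_i \sum_k `|P i k|.
have C0 : 0 <= C by apply: sumr_ge0 => i _; apply: sumr_ge0 => *.
set r := mu / (C + 1).
have r0 : 0 < r by apply: divr_gt0 => //; lra.
have Cr : C * r < mu by exact: aux_lt.
set U := [set x : 'cV[R]_q | simplex R q x /\
  forall i, xs i 0 - r <= x i 0 /\ x i 0 <= xs i 0 + r].
set phi := fun x : 'cV[R]_q => P *m x + (lstar - P *m xs).
have phiE x : phi x = lstar + P *m (x - xs) by rewrite /phi mulmxBr addrCA.
have Zphi x : Z *m phi x = x.
  by rewrite phiE mulmxDr Zls mulmxA ZP mul1mx addrC subrK.
have phipos x : U x -> forall j, 0 < phi x j 0.
  move=> [_ hx] j; rewrite phiE mxE.
  have hv : forall k, `|(x - xs) k 0| <= r.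
    move=> k; rewrite !mxE ler_norml; have := hx k; case => hk1 hk2.
    apply/andP; split; lra.
  have := mul_bound R m q P (x - xs) r (ltW r0) hv j; rewrite -/C ler_norml => /andP [h1 h2].
  have := lge j; lra.
exists U; split.
- have -> : U = (\bigcap_(i in setT) ([set x : 'cV[R]_q | 0 <= x i 0] `&`
      ([set x | xs i 0 - r <= x i 0] `&` [set x | x i 0 <= xs i 0 + r])))
      `&` [set x | \sum_i x i 0 = 1].
    apply/seteqP; split => x /=.
    + move=> [[h1 h2] h3]; split => // i _; have [hi1 hi2] := h3 i; split => //; exact: h1.
    + move=> [h1 h2]; split; first (split => // i; by case: (h1 i I)).
      by move=> i; case: (h1 i I) => _ [].
  apply: closedI.
    apply: closed_bigI => i _; apply: closedI; first exact: (closed_coord i (@closed_ge R 0)).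
    apply: closedI; first exact: (closed_coord i (@closed_ge R _)).
    exact: (closed_coord i (@closed_le R _)).
  have hsum : (fun x : 'cV[R]_q => \sum_i x i 0) =
      (fun x => ((const_mx 1 : 'M[R]_(1, q)) *m x + 0) 0 0).
    apply: funext => x; rewrite addr0 mxE; apply: eq_bigr => i _; by rewrite mxE mul1r.
  apply: (@preimage_closed _ _ (fun x : 'cV[R]_q => \sum_i x i 0) [set s | s = 1]).
    by move=> x _; rewrite hsum; exact: affine_coord_continuous.
  exact: closed_eq.
- by move=> x [].
- move=> x Ux; exists (phi x) => //; split.
    by move=> i; apply: ltW; exact: phipos.
  by rewrite (@inc_sum R q m e (phi x)) Zphi; case: Ux => [[]].
- exists r => // x [bx sx]; split => // i.
  case: bx => _ /(_ i 0); rewrite /ball /= ltr_norml => /andP [h1 h2].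
  split; lra.
- exists phi; split.
    apply: continuous_subspaceT; exact: affine_continuous.
  move=> x Ux; split; last exact: Zphi.
  split; first by move=> i; exact: phipos.
  by rewrite (@inc_sum R q m e (phi x)) Zphi; case: Ux => [[]].
Qed.
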